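(* For an $R$-module $M$ the following are equivalent: (i) $M$ is simple-$\mathcal F$-torsion-free; (ii) $M$ is prime, uniform, and $\mathrm{Ann}_R(M)\in\mathcal F^*$; (iii) there exist $\mathfrak p\in\mathcal F^*$ and a monomorphism $M\hookrightarrow\kappa(\mathfrak p)=R_{\mathfrak p}/\mathfrak pR_{\mathfrak p}$ with $M\neq 0$.
   Context: Throughout, $R$ is a commutative Noetherian local ring and $\mathcal F$ is a Gabriel topology on $R$: a nonempty set of ideals of $R$ such that (1) if $\mathfrak a\in\mathcal F$ and $\mathfrak a\subseteq\mathfrak b$ then $\mathfrak b\in\mathcal F$; (2) if $\mathfrak a,\mathfrak b\in\mathcal F$ then $\mathfrak a\cap\mathfrak b\in\mathcal F$; (3) if $\mathfrak b$ is an ideal and there is $\mathfrak a\in\mathcal F$ with $(\mathfrak b:r)\in\mathcal F$ for all $r\in\mathfrak a$, then $\mathfrak b\in\mathcal F$. For an $R$-module $X$ and ideal $\mathfrak a$, $X[\mathfrak a]=\{x\in X:\mathfrak a x=0\}$. $X$ is $\mathcal F$-torsion-free if $X[\mathfrak a]=0$ for all $\mathfrak a\in\mathcal F$. $M$ is simple-$\mathcal F$-torsion-free if $M\neq0$, $M$ is $\mathcal F$-torsion-free, and for every submodule $0\neq U\subsetneq M$, $M/U$ is not $\mathcal F$-torsion-free. $\mathcal F^*$ denotes the set of maximal elements (under inclusion) of $\mathrm{Spec}(R)\setminus\mathcal F$. A module $M\neq0$ is prime if every $r\in R$ acts on $M$ either as zero or injectively. A module is uniform if it is nonzero and any two nonzero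 submodules intersect nontrivially. *)

(* Defs.v *)
From HB Require Import structures.
From mathcomp Require Import all_boot all_order all_algebra.
Set Implicit Arguments. Unset Strict Implicit. Unset Printing Implicit Defensive.
Import GRing.Theory.
Local Open Scope ring_scope.

Section Defs.
Variable R : comUnitRingType.

Definition subset_p {T} (A B : T -> Prop) := forall x, A x -> B x.

Definition is_ideal (I : R -> Prop) : Prop :=
  [/\ I 0, (forall x y, I x -> I y -> I (x + y)) & (forall r x, I x -> I (r * x))].

Definition is_prime_ideal (P : R -> Prop) : Prop :=
  [/\ is_ideal P, ~ P 1 & (forall a b, P (a * b) -> P a \/ P b)].

Definition is_maximal_ideal (m : R -> Prop) : Prop :=
  [/\ is_ideal m, ~ m 1 &
     (forall J, is_ideal J -> subset_p m J -> ~ J 1 -> subset_p J m)].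

Definition noetherian : Prop :=
  forall I : nat -> R -> Prop, (forall n, is_ideal (I n)) ->
    (forall n, subset_p (I n) (I n.+1)) ->
    exists N, forall n, (N <= n)%N -> subset_p (I n) (I N).

Definition local_ring : Prop :=
  exists m, is_maximal_ideal m /\
    forall m', is_maximal_ideal m' -> forall x, m' x <-> m x.

Definition colon (b : R -> Prop) (r : R) : R -> Prop := fun x => b (x * r).

Definition gabriel_topology (F : (R -> Prop) -> Prop) : Prop :=
  [/\ (forall a, F a -> is_ideal a),
      (exists a, F a),
      (forall a b, F a -> is_ideal b -> subset_p a b -> F b),
      (forall a b, F a -> F b -> F (fun x => a x /\ b x)) &
      (forall b, is_ideal b ->
         (exists a, F a /\ forall r, a r -> F (colon b r)) -> F b)].

Definition Fstar (F : (R -> Prop) -> Prop) (p : R -> Prop) : Prop :=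
  [/\ is_prime_ideal p, ~ F p &
      (forall q, is_prime_ideal q -> ~ F q -> subset_p p q -> subset_p q p)].

Variable M : lmodType R.

Definition nonzero_mod : Prop := exists x : M, x <> 0.

Definition is_submodule (U : M -> Prop) : Prop :=
  [/\ U 0, (forall x y, U x -> U y -> U (x + y)) & (forall r x, U x -> U (r *: x))].

Definition ann_in (a : R -> Prop) (x : M) : Prop := forall r, a r -> r *: x = 0.

Definition F_torsion_free (F : (R -> Prop) -> Prop) : Prop :=
  forall a, F a -> forall x : M, ann_in a x -> x = 0.

(* M/U is F-torsion-free, unfolded: (M/U)[a] = 0 for all a in F,
   i.e. every x with a x ⊆ U lies in U. *)
Definition quot_F_torsion_free (F : (R -> Prop) -> Prop) (U : M -> Prop) : Prop :=
  forall a, F a -> forall x : M, (forall r, a r -> U (r *: x)) -> U x.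

Definition simple_F_torsion_free (F : (R -> Prop) -> Prop) : Prop :=
  [/\ nonzero_mod, F_torsion_free F &
      (forall U, is_submodule U -> (exists x, U x /\ x <> 0) ->
         (exists x, ~ U x) -> ~ quot_F_torsion_free F U)].

Definition prime_module : Prop :=
  nonzero_mod /\
  forall r : R, (forall x : M, r *: x = 0) \/ injective (fun x : M => r *: x).

Definition uniform_module : Prop :=
  nonzero_mod /\
  forall U V, is_submodule U -> is_submodule V ->
    (exists x, U x /\ x <> 0) -> (exists x, V x /\ x <> 0) ->
    exists x, [/\ U x, V x & x <> 0].

Definition Ann : R -> Prop := fun r => forall x : M, r *: x = 0.

(* kappa(p) = R_p / p R_p, presented as pairs (a, s) with s ∉ p
   ("a/s"), where a/s = b/t iff a t - b s ∈ p. *)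
Definition kappa_eq (p : R -> Prop) (u v : R * R) : Prop := p (u.1 * v.2 - v.1 * u.2).
Definition kappa_add (u v : R * R) : R * R := (u.1 * v.2 + v.1 * u.2, u.2 * v.2).
Definition kappa_scale (r : R) (u : R * R) : R * R := (r * u.1, u.2).

(* f : M -> kappa(p) is an injective R-linear map (on representatives) *)
Definition kappa_mono (p : R -> Prop) (f : M -> R * R) : Prop :=
  [/\ (forall x, ~ p (f x).2),
      (forall x y, kappa_eq p (f (x + y)) (kappa_add (f x) (f y))),
      (forall r x, kappa_eq p (f (r *: x)) (kappa_scale r (f x))) &
      (forall x y, kappa_eq p (f x) (f y) -> x = y)].

End Defs.

(* Main.v *)
Require Import Defs.
From HB Require Import structures.
From mathcomp Require Import all_boot all_order all_algebra.
From mathcomp Require Import ring.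
From Stdlib Require Import Classical ClassicalEpsilon FunctionalExtensionality PropExtensionality.
Set Implicit Arguments. Unset Strict Implicit. Unset Printing Implicit Defensive.
Import GRing.Theory.
Local Open Scope ring_scope.

Lemma pext T (P Q : T -> Prop) : (forall x, P x <-> Q x) -> P = Q.
Proof.
move=> h; apply: functional_extensionality => x; apply: propositional_extensionality; exact: h.
Qed.

Section Ideals.
Variable R : comUnitRingType.
Implicit Types I : R -> Prop.

Lemma ideal0 I : is_ideal I -> I 0. Proof. by case. Qed.
Lemma idealD I (h : is_ideal I) x y : I x -> I y -> I (x + y).
Proof. by case: h => _ h _; apply: h. Qed.
Lemma idealM I (h : is_ideal I) r x : I x -> I (r * x).
Proof. by case: h => _ _ h; apply: h. Qed.
Lemma idealMr I (h : is_ideal I) r x : I x -> I (x * r).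
Proof. move=> hx; rewrite mulrC; exact: idealM. Qed.
Lemma idealN I (h : is_ideal I) x : I x -> I (- x).
Proof. move=> hx; rewrite -mulN1r; exact: idealM. Qed.

Lemma colon_ideal I r : is_ideal I -> is_ideal (colon I r).
Proof.
move=> h; split; rewrite /colon.
- by rewrite mul0r; exact: ideal0.
- move=> u v hu hv; rewrite mulrDl; exact: idealD.
- move=> s u hu; rewrite -mulrA; exact: idealM.
Qed.

Lemma max_ideal (noe : noetherian R) (S : (R -> Prop) -> Prop)
  (Sid : forall J, S J -> is_ideal J) b (Sb : S b) :
  exists q, S q /\ forall J, S J -> subset_p q J -> subset_p J q.
Proof.
apply: NNPP => hne.
have step : forall q : {q | S q}, exists J : {J | S J},
    subset_p (sval q) (sval J) /\ ~ subset_p (sval J) (sval q).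
  move=> [q Sq] /=.
  apply: NNPP => h; apply: hne; exists q; split=> // J SJ qJ.
  apply: NNPP => nJq; apply: h; by exists (exist _ J SJ).
pose nx q := proj1_sig (constructive_indefinite_description _ (step q)).
have nxP q := proj2_sig (constructive_indefinite_description _ (step q)).
pose fix sq (n : nat) : {q | S q} := if n is n'.+1 then nx (sq n') else exist _ b Sb.
have [N hN] := noe (fun n => sval (sq n)) (fun n => Sid _ (proj2_sig (sq n)))
  (fun n => (nxP (sq n)).1).
exact: (nxP (sq N)).2 (hN N.+1 (leqnSn N)).
Qed.

Lemma key (F : (R -> Prop) -> Prop) (gF : gabriel_topology F) (noe : noetherian R) p (hp : Fstar F p)
  b (bi : is_ideal b) (pb : subset_p p b) s (bs : b s) (ps : ~ p s) : F b.
Proof.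
case: gF => Fid [a0 Fa0] Fup Fcap F3.
case: hp => [[pi p1 pp] nFp pmax].
apply: NNPP => nFb.
have [q [[qi nFq bq] qmax]] := @max_ideal noe
  (fun J => [/\ is_ideal J, ~ F J & subset_p b J])
  (fun J h => let: And3 h _ _ := h in h) b (And3 bi nFb (fun x h => h)).
have qp : is_prime_ideal q.
  split=> //.
  - move=> q1; apply: nFq; apply: (Fup a0) => // x _; rewrite -(mulr1 x); exact: idealM.
  - move=> x y qxy; apply: NNPP => /not_or_and [nx ny].
    pose J := fun z => exists w t, q w /\ z = w + t * x.
    have Ji : is_ideal J.
      split.
      - exists 0, 0; split; [exact: ideal0 | by rewrite mul0r addr0].
      - move=> z z' [w [t [qw ->]]] [w' [t' [qw' ->]]]; exists (w + w'), (t + t').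
        split; [exact: idealD | ring].
      - move=> r z [w [t [qw ->]]]; exists (r * w), (r * t); split; [exact: idealM | ring].
    have qJ : subset_p q J by move=> w qw; exists w, 0; split=> //; rewrite mul0r addr0.
    have FJ : F J.
      apply: NNPP => nFJ; apply: nx; apply: (qmax J) => //.
      - split=> // z bz; exact: qJ (bq _ bz).
      - exists 0, 1; split; [exact: ideal0 | by rewrite mul1r add0r].
    pose c := colon q x.
    have ci : is_ideal c by exact: colon_ideal.
    have Fc : F c.
      apply: NNPP => nFc; apply: ny; apply: (qmax c) => //.
      - split=> // z bz; rewrite /c /colon; apply: idealMr => //; exact: bq.
      - move=> z qz; rewrite /c /colon; exact: idealMr.
      - rewrite /c /colon mulrC; exact: qxy.
    apply: nFq; apply: F3 => //; exists J; split=> // r [w [t [qw ->]]].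
    apply: (Fup c) => //; first exact: colon_ideal.
    move=> z hz; rewrite /colon.
    have -> : z * (w + t * x) = z * w + t * (z * x) by ring.
    by apply: idealD => //; apply: idealM.
apply: ps; apply: (pmax q qp nFq) => [x px|]; [apply: bq; exact: pb | exact: bq].
Qed.

End Ideals.

Section Mods.
Variables (R : comUnitRingType) (M : lmodType R).

Lemma scaleC (a b : R) (x : M) : a *: (b *: x) = b *: (a *: x).
Proof. by rewrite !scalerA mulrC. Qed.

Lemma lemP0 (x0 : M) (a s : R) (y : M) (t : R) : a *: x0 = s *: y -> (a * t) *: x0 = (s * t) *: y.
Proof. by move=> e; rewrite -!scalerA scaleC e scaleC. Qed.

Lemma ann_zero (r : R) (x : M) : prime_module M -> x <> 0 -> r *: x = 0 -> Ann M r.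
Proof.
move=> [_ H] hx hr; case: (H r) => // inj; exfalso; apply: hx; apply: (inj x 0).
by rewrite /= hr scaler0.
Qed.

Lemma Ann_ideal : is_ideal (Ann M).
Proof.
split.
- move=> x; exact: scale0r.
- move=> a b ha hb x; by rewrite scalerDl ha hb addr0.
- move=> r a ha x; by rewrite -scalerA ha scaler0.
Qed.

Lemma cyc_sub (x : M) : is_submodule (fun z => exists s, z = s *: x).
Proof.
split.
- exists 0; by rewrite scale0r.
- move=> _ _ [s ->] [t ->]; exists (s + t); by rewrite scalerDl.
- move=> r _ [s ->]; exists (r * s); by rewrite scalerA.
Qed.

Lemma closure (F : (R -> Prop) -> Prop) (gF : gabriel_topology F)
  (H : forall U : M -> Prop, is_submodule U -> (exists x, U x /\ x <> 0) ->
         (exists x, ~ U x) -> ~ quot_F_torsion_free F U)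
  (U : M -> Prop) (hU : is_submodule U) (hn : exists x, U x /\ x <> 0) (x : M) :
  exists a, F a /\ forall r, a r -> U (r *: x).
Proof.
case: gF => Fid [a0 Fa0] Fup Fcap F3.
case: (hU) => U0 UD UZ.
pose C := fun y : M => exists a, F a /\ forall r, a r -> U (r *: y).
have CS : is_submodule C.
  split.
  - exists a0; split=> // r _; by rewrite scaler0.
  - move=> y z [a [Fa ha]] [b [Fb hb]]; exists (fun x => a x /\ b x); split; first exact: Fcap.
    move=> r [ar br]; rewrite scalerDr; exact: UD (ha _ ar) (hb _ br).
  - move=> s y [a [Fa ha]]; exists a; split=> // r ar; rewrite scaleC; exact: UZ (ha _ ar).
have Cfull : forall y, C y.
  apply: NNPP => hne; apply: (H C CS).
  - case: hn => u [Uu nu]; exists u; split=> //; exists a0; split=> // r _; exact: UZ.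
  - exact: not_all_ex_not.
  - move=> a Fa y hy.
    pose c := fun t => U (t *: y).
    have ci : is_ideal c.
      split; rewrite /c.
      - by rewrite scale0r.
      - move=> s t hs ht; rewrite scalerDl; exact: UD.
      - move=> r s hs; rewrite -scalerA; exact: UZ.
    exists c; split; last by move=> r.
    apply: F3 => //; exists a; split=> // r ar.
    case: (hy r ar) => b [Fb hb].
    apply: (Fup b) => //; first exact: colon_ideal.
    move=> t bt; rewrite /colon /c -scalerA; exact: hb.
exact: Cfull x.
Qed.

Lemma partA (F : (R -> Prop) -> Prop) (gF : gabriel_topology F) :
  simple_F_torsion_free M F -> [/\ prime_module M, uniform_module M & Fstar F (Ann M)].
Proof.
move=> [nz tf H].
have gF' := gF; case: gF' => Fid [a0 Fa0] Fup Fcap F3.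
have pm : prime_module M.
  split=> // r.
  case: (classic (forall x : M, r *: x = 0)) => [h|h]; [by left|right].
  have [x0 hx0] := not_all_ex_not _ _ h.
  move=> x y /= exy.
  apply/eqP; rewrite -subr_eq0; apply/eqP.
  apply: NNPP => hne.
  pose K := fun z : M => r *: z = 0.
  have KS : is_submodule K.
    split; rewrite /K.
    - exact: scaler0.
    - move=> a b ha hb; by rewrite scalerDr ha hb addr0.
    - move=> s a ha; by rewrite scaleC ha scaler0.
  apply: (H K KS).
  - exists (x - y); split=> //; by rewrite /K scalerBr exy subrr.
  - by exists x0.
  - move=> a Fa z hz; rewrite /K; apply: (tf a Fa) => s sa; rewrite scaleC; exact: hz.
have um : uniform_module M.
  split=> // U V hU hV hUn [v [Vv nv]].
  apply: NNPP => hno.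
  have [a [Fa ha]] := closure gF H hU hUn v.
  apply: nv; apply: (tf a Fa) => r ar.
  apply: NNPP => hr; apply: hno; exists (r *: v); split=> //; first exact: ha.
  case: hV => _ _ VZ; exact: VZ.
have pi : is_prime_ideal (Ann M).
  split; first exact: Ann_ideal.
  - case: nz => x nx h; apply: nx; by rewrite -(scale1r x) h.
  - move=> a b hab; case: pm => _ /(_ b) [hb|ib]; [by right | left].
    move=> x; apply: ib => /=; rewrite scaler0 scalerA mulrC; exact: hab.
split=> //; split=> //.
- move=> FA; case: nz => x nx; apply: nx; apply: (tf _ FA) => r hr; exact: hr.
- move=> q [qi nq1 qp] nFq sub r qr.
  apply: NNPP => nr.
  case: nz => x nx.
  have inj : injective (fun z : M => r *: z) by case: pm => _ /(_ r) [//|].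
  pose U := fun z : M => exists s, z = (s * r) *: x.
  have US : is_submodule U.
    split.
    - exists 0; by rewrite mul0r scale0r.
    - move=> y z [s ->] [t ->]; exists (s + t); by rewrite mulrDl scalerDl.
    - move=> t y [s ->]; exists (t * s); by rewrite scalerA mulrA.
  have hn : exists u, U u /\ u <> 0.
    exists (r *: x); split; first by exists 1; rewrite mul1r.
    move=> h0; apply: nx; apply: inj; by rewrite /= h0 scaler0.
  have [a [Fa ha]] := closure gF H US hn x.
  apply: nFq; apply: (Fup a) => // t at_.
  case: (ha t at_) => s hs.
  have : Ann M (t - s * r).
    apply: (ann_zero pm nx); by rewrite scalerBl hs subrr.
  move=> /sub hq; have := idealD qi hq (idealM qi s qr); by rewrite subrK.
Qed.

Lemma partB (F : (R -> Prop) -> Prop) (gF : gabriel_topology F) (noe : noetherian R) :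
  [/\ prime_module M, uniform_module M & Fstar F (Ann M)] -> simple_F_torsion_free M F.
Proof.
move=> [pm um hA].
have gF' := gF; case: gF' => Fid [a0 Fa0] Fup Fcap F3.
have nz := proj1 pm.
have tf : F_torsion_free M F.
  move=> a Fa x hx; apply: NNPP => nx.
  case: hA => [[Ai _ _] nFA _]; apply: nFA; apply: (Fup a) => // r ar.
  exact: ann_zero pm nx (hx r ar).
split=> // U hU [u [Uu nu]] [x nUx] qtf.
case: (hU) => U0 UD UZ.
have nx : x <> 0 by move=> e; apply: nUx; rewrite e.
pose b := fun t => U (t *: x).
have bi : is_ideal b.
  split; rewrite /b.
  - by rewrite scale0r.
  - move=> s t hs ht; rewrite scalerDl; exact: UD.
  - move=> r s hs; rewrite -scalerA; exact: UZ.
have [z [Uz [s ez] nz0]] : exists z, [/\ U z, (exists s, z = s *: x) & z <> 0].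
  apply: (proj2 um) => //; first exact: cyc_sub.
  - by exists u.
  - exists x; split=> //; exists 1; by rewrite scale1r.
apply: nUx; apply: (qtf b) => //.
apply: (@key R F gF noe (Ann M) hA b bi _ s).
- move=> t At; rewrite /b (At x); exact: U0.
- by rewrite /b -ez.
- move=> As; apply: nz0; by rewrite ez As.
Qed.

Lemma partC (F : (R -> Prop) -> Prop) :
  [/\ prime_module M, uniform_module M & Fstar F (Ann M)] ->
  exists p : R -> Prop, Fstar F p /\ (exists f : M -> R * R, kappa_mono p f) /\ nonzero_mod M.
Proof.
move=> [pm um hA]; exists (Ann M); split=> //.
have nz := proj1 pm.
split=> //.
case: nz => x0 nx0.
have pi : is_prime_ideal (Ann M) by case: hA.
case: pi => Ai A1 Ap.
pose P (y : M) (u : R * R) := ~ Ann M u.2 /\ u.1 *: x0 = u.2 *: y.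
have ex : forall y, exists u, P y u.
  move=> y; case: (classic (y = 0)) => [->|ny].
  - exists (0, 1); split=> //=; by rewrite scale0r scaler0.
  - have [z [[a ea] [b eb] nz]] : exists z, [/\ (exists a, z = a *: x0), (exists b, z = b *: y) & z <> 0].
      apply: (proj2 um); [exact: cyc_sub | exact: cyc_sub | | ].
      + exists x0; split=> //; exists 1; by rewrite scale1r.
      + exists y; split=> //; exists 1; by rewrite scale1r.
    exists (a, b); split=> /=; last by rewrite -ea -eb.
    move=> Ab; apply: nz; by rewrite eb (Ab y).
pose f y := proj1_sig (constructive_indefinite_description _ (ex y)).
have fP y : P y (f y) := proj2_sig (constructive_indefinite_description _ (ex y)).
have Aprod : forall u v, ~ Ann M u -> ~ Ann M v -> ~ Ann M (u * v).
  by move=> u v hu hv /Ap [].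
have keyeq : forall y y' u v, P y u -> P y' v -> (kappa_eq (Ann M) u v <-> y = y').
  move=> y y' [a s] [b t] [/= hs ea] [/= ht eb]; rewrite /kappa_eq /=.
  have E : (a * t - b * s) *: x0 = (s * t) *: (y - y').
    by rewrite scalerBl (lemP0 t ea) (lemP0 s eb) scalerBr [t * s]mulrC.
  split.
  - move=> Ac; apply/eqP; rewrite -subr_eq0; apply/eqP.
    have inj : injective (fun z : M => (s * t) *: z).
      by case: (proj2 pm (s * t)) => // h; exfalso; apply: (Aprod _ _ hs ht) h.
    apply: inj => /=; by rewrite -E (Ac x0) scaler0.
  - move=> e; apply: (ann_zero pm nx0); by rewrite E e subrr scaler0.
have Padd : forall y z u v, P y u -> P z v -> P (y + z) (kappa_add u v).
  move=> y z [a s] [b t] [/= hs ea] [/= ht eb]; split=> /=; first exact: Aprod.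
  by rewrite scalerDl scalerDr (lemP0 t ea) (lemP0 s eb) [t * s]mulrC.
have Psc : forall r y u, P y u -> P (r *: y) (kappa_scale r u).
  move=> r y [a s] [/= hs ea]; split=> //=.
  by rewrite -scalerA ea scaleC.
exists f; split.
- move=> y; exact: (fP y).1.
- move=> y z; exact: (proj2 (keyeq _ _ _ _ (fP (y + z)) (Padd _ _ _ _ (fP y) (fP z)))).
- move=> r y; exact: (proj2 (keyeq _ _ _ _ (fP (r *: y)) (Psc r _ _ (fP y)))).
- move=> y z h; exact: (proj1 (keyeq _ _ _ _ (fP y) (fP z)) h).
Qed.

Lemma partD (F : (R -> Prop) -> Prop) :
  (exists p : R -> Prop, Fstar F p /\ (exists f : M -> R * R, kappa_mono p f) /\ nonzero_mod M) ->
  [/\ prime_module M, uniform_module M & Fstar F (Ann M)].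
Proof.
move=> [p [hp [[f [fd fadd fsc finj]] nz]]].
have [[pi p1 pp] _ _] := hp.
have ksym : forall u v, kappa_eq p u v -> kappa_eq p v u.
  move=> u v; rewrite /kappa_eq => h; have := idealN pi h; by rewrite opprB.
have ktrans : forall u v w, ~ p v.2 -> kappa_eq p u v -> kappa_eq p v w -> kappa_eq p u w.
  move=> [a s] [b t] [c w] /= ht; rewrite /kappa_eq /= => h1 h2.
  have : p (t * (a * w - c * s)).
    have -> : t * (a * w - c * s) = w * (a * t - b * s) + s * (b * w - c * t) by ring.
    by apply: (idealD pi); apply: (idealM pi).
  by case/pp.
have f0 : p (f 0).1.
  move: (fd 0) (fadd 0 0); rewrite addr0; case: (f 0) => c s /=.
  rewrite /kappa_eq /kappa_add /= => ns h.
  have : p ((- (c * s)) * s).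
    by have -> : (- (c * s)) * s = c * (s * s) - (c * s + c * s) * s by ring.
  case/pp => [|//]; move/(idealN pi); rewrite opprK; case/pp => //.
have zeroP : forall x, p (f x).1 <-> x = 0.
  move=> x; split; last by move->.
  move=> h; apply: finj; move: h (fd x) (fd 0) f0.
  case: (f x) => a s; case: (f 0) => c w; rewrite /kappa_eq /= => ha hs hw hc.
  apply: (idealD pi); first exact: (idealMr pi).
  apply: (idealN pi); exact: (idealMr pi).
have pmA : forall r, p r -> forall x : M, r *: x = 0.
  move=> r pr x; apply/zeroP.
  move: (fsc r x) (fd (r *: x)) (fd x).
  case: (f (r *: x)) => a s; case: (f x) => b t; rewrite /kappa_eq /kappa_scale /= => h hs ht.
  have : p (a * t).
    have -> : a * t = (a * t - r * b * s) + r * (b * s) by ring.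
    apply: (idealD pi) => //; exact: (idealMr pi).
  by case/pp.
have pmI : forall r, ~ p r -> injective (fun x : M => r *: x).
  move=> r nr x y /= e; apply: finj.
  have h1 := fsc r x; have h2 := fsc r y; rewrite e in h1.
  have h3 : kappa_eq p (kappa_scale r (f x)) (kappa_scale r (f y)).
    exact: (ktrans _ _ _ (fd (r *: y)) (ksym _ _ h1) h2).
  move: h3 (fd x) (fd y); case: (f x) => a s; case: (f y) => b t.
  rewrite /kappa_eq /kappa_scale /= => h _ _.
  have : p (r * (a * t - b * s)).
    by have -> : r * (a * t - b * s) = r * a * t - r * b * s by ring.
  by case/pp.
have Aeq : forall r, Ann M r <-> p r.
  move=> r; split; last exact: pmA.
  move=> Ar; apply: NNPP => nr; case: nz => x nx; apply: nx; apply: (pmI r nr).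
  by rewrite /= (Ar x) scaler0.
have pm : prime_module M.
  split=> // r; case: (classic (p r)) => h; [left; exact: pmA | right; exact: pmI].
have AE : Ann M = p by apply: pext => r; exact: Aeq.
split=> //; last by rewrite AE.
split=> // U V [U0 UD UZ] [V0 VD VZ] [u [Uu nu]] [v [Vv nv]].
have nau : ~ p (f u).1 by move/zeroP.
have nav : ~ p (f v).1 by move/zeroP.
have Y : kappa_eq p (kappa_scale ((f v).1 * (f u).2) (f u))
                    (kappa_scale ((f u).1 * (f v).2) (f v)).
  rewrite /kappa_eq /kappa_scale /=; set z := (X in p X).
  have -> : z = 0 by rewrite /z; ring.
  exact: (ideal0 pi).
have E : ((f v).1 * (f u).2) *: u = ((f u).1 * (f v).2) *: v.
  apply: finj; apply: (ktrans _ (kappa_scale ((f v).1 * (f u).2) (f u)) _ (fd u) (fsc _ _)).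
  exact: (ktrans _ (kappa_scale ((f u).1 * (f v).2) (f v)) _ (fd v) Y (ksym _ _ (fsc _ _))).
exists (((f v).1 * (f u).2) *: u); split.
- exact: UZ.
- rewrite E; exact: VZ.
- move=> h0; apply: nu.
  have nbs : ~ p ((f v).1 * (f u).2) by case/pp; [exact: nav | exact: fd u].
  apply: (pmI _ nbs); by rewrite /= h0 scaler0.
Qed.

End Mods.

Theorem theorem1p5 (R : comUnitRingType) (F : (R -> Prop) -> Prop)
  (M : lmodType R) :
  noetherian R -> local_ring R -> gabriel_topology F ->
  (simple_F_torsion_free M F <->
     [/\ prime_module M, uniform_module M & Fstar F (Ann M)]) /\
  ([/\ prime_module M, uniform_module M & Fstar F (Ann M)] <->
     (exists p : R -> Prop, Fstar F p /\
        (exists f : M -> R * R, kappa_mono p f) /\ nonzero_mod M)).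
Proof.
move=> noe _ gF; split; split.
- exact: partA gF.
- exact: partB gF noe.
- exact: partC.
- exact: partD.
Qed.
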